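(* For all positive integers $T$ and $k$, \[ \mathrm{LCS}_T(2T-1,\mathcal P_k)\geq k^{1/\binom{2T-1}{T}}. \]
   Context: $\mathcal{P}_k$ is the set of permutations on $k$ letters (words over $\{1,\dots,k\}$ in which each letter occurs exactly once). For a set $\mathcal W$ of words, $\mathrm{LCS}(\mathcal W)$ is the length of a longest word that is a subsequence (letters in order, not necessarily consecutive) of every word in $\mathcal W$; $\mathrm{LCS}_T(\mathcal W)=\max\mathrm{LCS}(\mathcal W')$ over subsets $\mathcal W'\subset\mathcal W$ of size $T$; and for a family $\mathcal F$, $\mathrm{LCS}_T(t,\mathcal F)=\min\mathrm{LCS}_T(\mathcal W)$ over all $t$-element subsets $\mathcal W\subset\mathcal F$. *)

(* Defs.v *)
From mathcomp Require Import all_boot all_fingroup.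
Set Implicit Arguments. Unset Strict Implicit. Unset Printing Implicit Defensive.

(* The letters {1,...,k} are represented by 'I_k = {0,...,k-1}.
   A permutation s : {perm 'I_k} is identified with the word s(0) s(1) ... s(k-1),
   a word in which every letter occurs exactly once.  P_k = [set: {perm 'I_k}]. *)
Definition pword (k : nat) (s : {perm 'I_k}) : seq 'I_k :=
  [seq s i | i <- enum 'I_k].

(* LCS(W): the length of a longest word that is a subsequence of every word of W.
   (Any common subsequence of a nonempty W has length <= k, so the search
   over lengths n <= k is exhaustive for nonempty W.) *)
Definition LCS (k : nat) (W : {set {perm 'I_k}}) : nat :=
  \max_(n < k.+1 | [exists s : n.-tuple 'I_k,
                      [forall w in W, subseq (val s) (pword w)]]) n.

Definition LCS_T (k T : nat) (W : {set {perm 'I_k}}) : nat :=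
  \max_(W' : {set {perm 'I_k}} | (W' \subset W) && (#|W'| == T)) LCS W'.

(* LCS_T(t, P_k) = min of LCS_T(W) over t-element subsets W of P_k.
   (If there is no such subset the min is taken to be k, an upper bound
   of all LCS values.) *)
Definition LCS_T_Pk (k T t : nat) : nat :=
  \big[minn/k]_(W : {set {perm 'I_k}} | #|W| == t) LCS_T T W.

(* Main.v *)
Require Import Defs.
From mathcomp Require Import all_boot all_fingroup.
From Stdlib Require Import Reals.
From mathcomp Require Import zify.

Set Implicit Arguments. Unset Strict Implicit. Unset Printing Implicit Defensive.

Section Comb.
Variable k : nat.
Local Notation P := {perm 'I_k}.

Definition ltS (S : {set P}) (a b : 'I_k) : bool :=
  [forall w in S, (w^-1)%g a < (w^-1)%g b].

Lemma ltS_trans S : transitive (ltS S).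
Proof.
move=> b a c /forallP Hab /forallP Hbc; apply/forallP => w; apply/implyP => wS.
exact: ltn_trans (implyP (Hab w) wS) (implyP (Hbc w) wS).
Qed.

Lemma ltS_irr (S : {set P}) w0 : w0 \in S -> irreflexive (ltS S).
Proof. by move=> w0S a; apply/negP => /forallP/(_ w0); rewrite w0S ltnn. Qed.

Lemma sorted_sub_enum (u : seq 'I_k) :
  sorted (fun i j : 'I_k => i < j) u -> subseq u (enum 'I_k).
Proof.
move=> su.
have lt_tr : transitive (fun i j : 'I_k => i < j) by move=> ???; exact: ltn_trans.
have su' : sorted (fun i j : 'I_k => i < j) (enum 'I_k).
  by have := iota_ltn_sorted 0 k; rewrite -val_enum_ord sorted_map.
have uu : uniq u by apply: (sorted_uniq lt_tr _ su) => i; exact: ltnn.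
have -> : u = [seq x <- enum 'I_k | x \in u].
  apply: (sorted_eq lt_tr) => //.
  - by move=> i j /andP[a b]; have := ltn_trans a b; rewrite ltnn.
  - exact: sorted_filter.
  - apply: uniq_perm => //; first by rewrite filter_uniq // enum_uniq.
    by move=> x; rewrite mem_filter mem_enum andbT.
exact: filter_subseq.
Qed.

Lemma chain_subseq S t w : sorted (ltS S) t -> w \in S -> subseq t (pword w).
Proof.
move=> st wS.
have st' : sorted (fun i j : 'I_k => i < j) (map (w^-1)%g t).
  rewrite sorted_map; apply: sub_sorted st => a b /forallP/(_ w)/implyP/(_ wS).
  by [].
have := map_subseq w (sorted_sub_enum st').
have -> : map w (map (w^-1)%g t) = t.
  by elim: t {st st'} => //= x t ->; rewrite permKV.
by [].
Qed.

Definition fS (S : {set P}) (a : 'I_k) : nat :=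
  \max_(n < k | [exists t : n.-tuple 'I_k, sorted (ltS S) (rcons t a)]) n.

Lemma fS_wit S a : exists t : seq 'I_k, size t = fS S a /\ sorted (ltS S) (rcons t a).
Proof.
rewrite /fS; apply: (big_ind (fun x => exists t : seq 'I_k, size t = x /\ sorted (ltS S) (rcons t a))).
- by exists [::].
- by move=> x y hx hy; rewrite /maxn; case: ifP.
- move=> i /existsP[t st]; exists (val t); by rewrite size_tuple.
Qed.

Lemma fS_up S a (t : seq 'I_k) :
  size t < k -> sorted (ltS S) (rcons t a) -> size t <= fS S a.
Proof.
move=> hk st; rewrite /fS.
apply: (leq_bigmax_cond (Ordinal hk)).
apply/existsP; exists (@Tuple _ _ t (introT eqP (erefl (size t)))); exact: st.
Qed.

Lemma size_chain (S : {set P}) w0 s : w0 \in S -> sorted (ltS S) s -> size s <= k.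
Proof.
move=> w0S ss.
have us : uniq s by apply: (sorted_uniq (@ltS_trans S) (ltS_irr w0S) ss).
move/card_uniqP: us => <-; rewrite -[k in _ <= k]card_ord; exact: max_card.
Qed.

Lemma sorted_rcons2 (e : rel 'I_k) s x y :
  sorted e (rcons s x) -> e x y -> sorted e (rcons (rcons s x) y).
Proof.
case: s => [|z s] /=; first by move=> _ ->.
by move=> h1 h2; rewrite rcons_path last_rcons h1 h2.
Qed.

Lemma key (S : {set P}) w0 a b : w0 \in S -> ltS S a b -> fS S a < fS S b.
Proof.
move=> w0S lab; have [t [st so]] := fS_wit S a.
have so2 := sorted_rcons2 so lab.
have := size_chain w0S so2; rewrite !size_rcons st => h.
have := fS_up (t := rcons t a) (a := b) (S := S); rewrite size_rcons st.
by apply.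
Qed.

Lemma fS_LCS (S : {set P}) w0 a : w0 \in S -> fS S a < LCS S.
Proof.
move=> w0S; have [t [st so]] := fS_wit S a.
have := size_chain w0S so; rewrite size_rcons st => h.
have h' : (fS S a).+1 < k.+1 by [].
rewrite /LCS; apply: (leq_bigmax_cond (Ordinal h')).
apply/existsP.
have sz : size (rcons t a) == (fS S a).+1 by rewrite size_rcons st.
exists (@Tuple _ _ _ sz); apply/forallP => w; apply/implyP => wS.
exact: (chain_subseq so wS).
Qed.

Lemma sub_card (X : {set P}) n : n <= #|X| -> exists S : {set P}, S \subset X /\ #|S| = n.
Proof.
move=> h; exists [set x in take n (enum X)]; split.
- by apply/subsetP => x; rewrite inE => /mem_take; rewrite mem_enum.
- rewrite cardsE; move/card_uniqP: (take_uniq n (enum_uniq (mem X))) => ->.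
  by rewrite size_takel // -cardE.
Qed.

Lemma majority T (W : {set P}) (a b : 'I_k) : #|W| = (2 * T).-1 -> a != b ->
  exists S : {set P}, (S \subset W) && (#|S| == T) /\ (ltS S a b || ltS S b a).
Proof.
move=> hW nab.
pose A' := [set w : P | (w^-1)%g a < (w^-1)%g b].
have hc := cardsID A' W; rewrite hW -subn1 in hc.
have [h1 | h2] : T <= #|W :&: A'| \/ T <= #|W :\: A'| by move: hc; set u := #|_ :&: _|; set v := #|_ :\: _|; lia.
- have [S [sub cS]] := sub_card h1; exists S; split.
  + by rewrite cS eqxx andbT; apply: subset_trans sub (subsetIl _ _).
  + apply/orP; left; apply/forallP => w; apply/implyP => wS.
    by have := subsetP sub w wS; rewrite !inE => /andP[_ ->].
- have [S [sub cS]] := sub_card h2; exists S; split.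
  + by rewrite cS eqxx andbT; apply: subset_trans sub (subsetDl _ _).
  + apply/orP; right; apply/forallP => w; apply/implyP => wS.
    have := subsetP sub w wS; rewrite !inE => /andP[h _].
    have ne : ((w^-1)%g b : nat) != (w^-1)%g a.
      by rewrite (inj_eq val_inj) (inj_eq (@perm_inj _ _)) eq_sym.
    by rewrite ltn_neqAle ne leqNgt.
Qed.

Lemma comb T (W : {set P}) : 0 < T -> #|W| = (2 * T).-1 ->
  k <= expn (LCS_T T W) 'C((2 * T).-1, T).
Proof.
move=> hT hW.
pose D := [set S : {set P} | S \subset W & #|S| == T].
have cD : #|D| = 'C((2 * T).-1, T) by rewrite cards_draws hW.
pose L := LCS_T T W.
have flt : forall S a, S \in D -> fS S a < L.
  move=> S a; rewrite inE => /andP[sub /eqP cS].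
  have : 0 < #|S| by rewrite cS.
  rewrite card_gt0 => /set0Pn[w0 w0S].
  apply: (leq_trans (fS_LCS a w0S)).
  rewrite /L /LCS_T; apply: (leq_bigmax_cond S); by rewrite sub cS eqxx.
have fl : forall (i : 'I_#|D|) a, fS (enum_val i) a < L.
  by move=> i a; apply: flt; exact: enum_valP.
pose g a := [ffun i => Ordinal (fl i a)].
have ginj : injective g.
  move=> a b gab; apply/eqP; apply/negPn/negP => nab.
  have [S [SD hS]] := majority hW nab.
  have SD' : S \in D by rewrite inE.
  have : 0 < #|S| by move: SD => /andP[_ /eqP ->].
  rewrite card_gt0 => /set0Pn[w0 w0S].
  have ne : fS S a != fS S b.
    case/orP: hS => h; have := key w0S h.
    + by rewrite ltn_neqAle => /andP[].
    + by rewrite ltn_neqAle eq_sym => /andP[].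
  have [i ei] : exists i : 'I_#|D|, enum_val i = S.
    by exists (enum_rank_in SD' S); apply: enum_rankK_in.
  move/ffunP/(_ i)/(congr1 val): gab.
  rewrite /= !ffunE /= ei => e.
  by rewrite e eqxx in ne.
have := leq_card g ginj; rewrite card_ffun !card_ord cD; exact.
Qed.

End Comb.

Lemma INR_expn x c : INR (expn x c) = (INR x ^ c)%R.
Proof.
elim: c => [|c IH]; first by rewrite expn0.
by rewrite expnS -multE mult_INR IH.
Qed.

Theorem theorem25 (T k : nat) (hT : (0 < T)%N) (hk : (0 < k)%N) :
  (Rpower (INR k) (/ INR 'C((2 * T).-1, T)) <= INR (LCS_T_Pk k T (2 * T).-1))%R.
Proof.
set C := 'C((2 * T).-1, T).
have hC : 0 < C by rewrite /C bin_gt0; lia.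
set X := LCS_T_Pk k T (2 * T).-1.
have hX : k <= expn X C.
  rewrite /X /LCS_T_Pk; apply: (big_ind (fun x => k <= expn x C)).
  - by rewrite -{1}(expn1 k) leq_pexp2l.
  - by move=> x y hx hy; rewrite /minn; case: ifP.
  - move=> W /eqP hW; exact: comb.
have X0 : 0 < X.
  case: X hX => // ; rewrite exp0n //; lia.
have Rk : (0 < INR k)%R by apply: lt_0_INR; apply/ltP.
have RX : (0 < INR X)%R by apply: lt_0_INR; apply/ltP.
have RC : (0 < INR C)%R by apply: lt_0_INR; apply/ltP.
have le1 : (INR k <= INR X ^ C)%R by rewrite -INR_expn; apply: le_INR; apply/leP.
apply: Rle_trans (Rle_Rpower_l _ _ _ _ (conj Rk le1)) _.
  by apply: Rlt_le; apply: Rinv_0_lt_compat.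
rewrite -(Rpower_pow C (INR X) RX) Rpower_mult Rinv_r; last by apply: Rgt_not_eq.
by rewrite Rpower_1 //; apply: Rle_refl.
Qed.
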